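(* Let $K\subset\mathbb{R}^n$ be a closed convex set, $y\in\mathbb{R}^n$, $\nu\in K$, and $C\ge 2$ (with $C>2$). For each $m\ge1$ let $\nu_m(y)$ be the output of the Algorithm in the context applied to the bounded convex set $K_m=B(\nu,2^m)\cap K$ with data $y$ (and any starting point in $K_m$). Then all the points $\nu_m(y)$, $m\ge1$, lie in a compact subset of $\mathbb{R}^n$.
   Context: $\|\cdot\|$ is the Euclidean norm, $B(\theta,r)$ the closed Euclidean ball. Algorithm (for a nonempty bounded convex set $L$ with $d=\operatorname{diam}(L)$, constant $C>2$, starting point $\nu_0\in L$): before seeing data, for every $\theta\in L$ and $k\ge1$ fix a maximal (under inclusion) $\frac{d}{2^k(C+1)}$-packing $M_k(\theta)$ of $B(\theta,d/2^{k-1})\cap L$ (distinct points at mutual distance $\ge\frac{d}{2^k(C+1)}$). Given $y$, put $\Upsilon_1=\nu_0$ and $\Upsilon_{k+1}=\arg\min_{\nu\in M_k(\Upsilon_k)}\|y-\nu\|$ (ties: lexicographically least); output $\lim_k\Upsilon_k$ (the sequence is Cauchy). *)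

(* Defs.v *)
From HB Require Import structures.
From mathcomp Require Import all_boot all_order all_algebra.
From mathcomp Require Import all_classical all_reals all_analysis.
Set Implicit Arguments. Unset Strict Implicit. Unset Printing Implicit Defensive.
Import Order.TTheory GRing.Theory Num.Theory.
Import numFieldNormedType.Exports.
Local Open Scope classical_set_scope.
Local Open Scope ring_scope.

Section Alg.
Variables (R : realType) (n : nat).
Notation V := 'rV[R]_n.

(* Euclidean norm on R^n (the library norm on matrices is the max norm). *)
Definition enorm (x : V) : R := Num.sqrt (\sum_(i < n) (x ord0 i) ^+ 2).

Definition eball (theta : V) (r : R) : set V := [set x | enorm (x - theta) <= r].

Definition is_convex (L : set V) : Prop :=
  forall x y (t : R), L x -> L y -> 0 <= t -> t <= 1 -> L (t *: x + (1 - t) *: y).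

(* diameter (for a nonempty bounded set this is the usual supremum) *)
Definition ediam (L : set V) : R := sup [set enorm (x - y) | x in L & y in L].

Definition lex_lt (x y : V) : Prop :=
  exists i : 'I_n, (forall j : 'I_n, (j < i)%N -> x ord0 j = y ord0 j) /\ x ord0 i < y ord0 i.
Definition lex_le (x y : V) : Prop := x = y \/ lex_lt x y.

Definition is_packing (eps : R) (A M : set V) : Prop :=
  M `<=` A /\ forall p q, M p -> M q -> p <> q -> eps <= enorm (p - q).

Definition is_maximal_packing (eps : R) (A M : set V) : Prop :=
  is_packing eps A M /\
  forall M', is_packing eps A M' -> M `<=` M' -> M' = M.

Definition packing_family (L : set V) (C : R) (Mk : nat -> V -> set V) : Prop :=
  forall theta k, L theta -> (0 < k)%N ->
    is_maximal_packing (ediam L / (2 ^+ k * (C + 1)))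
      (eball theta (ediam L / 2 ^+ k.-1) `&` L) (Mk k theta).

Definition lex_argmin (y : V) (M : set V) (nu : V) : Prop :=
  M nu /\ forall mu, M mu ->
    enorm (y - nu) < enorm (y - mu) \/
    (enorm (y - nu) = enorm (y - mu) /\ lex_le nu mu).

Definition algorithm_run (Mk : nat -> V -> set V) (nu0 y : V) (Ups : nat -> V) : Prop :=
  Ups 1%N = nu0 /\ forall k, (0 < k)%N -> lex_argmin y (Mk k (Ups k)) (Ups k.+1).

Definition algorithm_output (L : set V) (C : R) (nu0 : V) (Mk : nat -> V -> set V)
    (y x : V) : Prop :=
  L nu0 /\ packing_family L C Mk /\
  exists Ups : nat -> V, algorithm_run Mk nu0 y Ups /\ Ups @ \oo --> x.

End Alg.

(* Main.v *)
Require Import Defs.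
From HB Require Import structures.
From mathcomp Require Import all_boot all_order all_algebra.
From mathcomp Require Import all_classical all_reals all_analysis.
From mathcomp Require Import ring lra.
Set Warnings "-all".
Set Implicit Arguments. Unset Strict Implicit.
Import Order.TTheory GRing.Theory Num.Theory.
Import numFieldNormedType.Exports.
Local Open Scope classical_set_scope.
Local Open Scope ring_scope.

Section E.
Variables (R : realType) (n : nat).
Notation V := 'rV[R]_n.

Lemma enorm_ge0 (a : V) : 0 <= enorm a.
Proof. exact: sqrtr_ge0. Qed.

Lemma enorm_sq (a : V) : enorm a ^+ 2 = \sum_(i < n) (a ord0 i) ^+ 2.
Proof. by rewrite /enorm sqr_sqrtr // sumr_ge0 // => i _; exact: sqr_ge0. Qed.

Lemma enorm_coord (a : V) i : `|a ord0 i| <= enorm a.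
Proof.
rewrite /enorm -sqrtr_sqr ler_sqrt; last by rewrite sumr_ge0 // => j _; exact: sqr_ge0.
rewrite (bigD1 i) //= lerDl sumr_ge0 // => j _; exact: sqr_ge0.
Qed.

Lemma enormN (a : V) : enorm (- a) = enorm a.
Proof. by rewrite /enorm; congr Num.sqrt; apply: eq_bigr => i _; rewrite mxE sqrrN. Qed.

Lemma enorm0 : enorm (0 : V) = 0.
Proof. by rewrite /enorm big1 ?sqrtr0 // => i _; rewrite mxE expr0n. Qed.

Lemma enorm_eq0 (a : V) : enorm a = 0 -> forall i, a ord0 i = 0.
Proof.
move=> h i; have := enorm_coord a i; rewrite h normr_le0 => /eqP //.
Qed.

Lemma cs_sum (a : V) (b : V) :
  \sum_(i < n) a ord0 i * b ord0 i <= enorm a * enorm b.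
Proof.
set A := enorm a; set B := enorm b.
have hA : 0 <= A by exact: enorm_ge0.
have hB : 0 <= B by exact: enorm_ge0.
have key : 2 * (A * B) * \sum_(i < n) a ord0 i * b ord0 i <= 2 * (A * B) * (A * B).
  rewrite mulr_sumr.
  have -> : 2 * (A * B) * (A * B) = \sum_(i < n) ((a ord0 i)^+2 * B^+2 + (b ord0 i)^+2 * A^+2).
    rewrite big_split /= -!mulr_suml -!enorm_sq -/A -/B; ring.
  apply: ler_sum => i _.
  have := sqr_ge0 (a ord0 i * B - b ord0 i * A); nra.
have [ABz|ABp] := eqVneq (A * B) 0.
  rewrite ABz; move: ABz => /eqP; rewrite mulf_eq0 => /orP[]/eqP h.
    by rewrite big1 // => i _; rewrite (enorm_eq0 h) mul0r.
  by rewrite big1 // => i _; rewrite (enorm_eq0 h) mulr0.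
have pAB : 0 < A * B by rewrite lt_def ABp mulr_ge0.
by move: key; rewrite ler_pM2l // mulr_gt0.
Qed.

Lemma enormD (a b : V) : enorm (a + b) <= enorm a + enorm b.
Proof.
have h0 : 0 <= enorm a + enorm b by rewrite addr_ge0 // enorm_ge0.
rewrite -(ger0_norm h0) -sqrtr_sqr /enorm ler_sqrt ?sqr_ge0 //.
have := cs_sum a b.
rewrite sqrrD !sqr_sqrtr ?sumr_ge0 // => [h||]; last 2 first.
- by move=> i _; exact: sqr_ge0.
- by move=> i _; exact: sqr_ge0.
have -> : \sum_(i < n) (a + b) ord0 i ^+ 2 = \sum_(i < n) (a ord0 i)^+2 + \sum_(i < n) (b ord0 i)^+2 + 2 * \sum_(i < n) a ord0 i * b ord0 i.
  rewrite mulr_sumr -!big_split /=; apply: eq_bigr => i _; rewrite mxE; ring.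
move: h; rewrite /enorm mulr2n; lra.
Qed.

Lemma enorm_tri (a b c : V) : enorm (a - c) <= enorm (a - b) + enorm (b - c).
Proof. by have := enormD (a - b) (b - c); rewrite addrA subrK. Qed.

Lemma enorm_sym (a b : V) : enorm (a - b) = enorm (b - a).
Proof. by rewrite -enormN opprB. Qed.

End E.

Lemma packing_near (R : realType) (n : nat) (eps : R) (A M : set 'rV[R]_n) x :
  0 <= eps -> is_maximal_packing eps A M -> A x -> exists2 q, M q & enorm (q - x) <= eps.
Proof.
move=> e0 [[MA Mp] Mmax] Ax.
apply: contrapT => hn.
have hq : forall q, M q -> eps < enorm (q - x).
  move=> q Mq; rewrite ltNge; apply/negP => hle; apply: hn; by exists q.
have Mx : M x.
  have -> : M = M `|` [set x].
    apply/esym/Mmax; last by move=> z Mz; left.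
    split; first by move=> z [/MA //|->].
    move=> p q [Mp'|->] [Mq'|->] pq.
    - exact: Mp.
    - exact: ltW (hq _ Mp').
    - by rewrite enorm_sym; exact: ltW (hq _ Mq').
    - by [].
  by right.
by have := hq _ Mx; rewrite subrr enorm0 ltNge e0.
Qed.

Lemma diam_props (R : realType) (n : nat) (L : set 'rV[R]_n) nu rho :
  L nu -> L `<=` eball nu rho ->
  0 <= ediam L /\ forall x z, L x -> L z -> enorm (x - z) <= ediam L.
Proof.
move=> Lnu Lb.
have ub : has_ubound [set enorm (x - y) | x in L & y in L].
  exists (rho + rho) => _ [x Lx [z Lz <-]].
  apply: le_trans (enorm_tri x nu z) _.
  by apply: lerD; [exact: Lb|rewrite enorm_sym; exact: Lb].
have H : forall x z, L x -> L z -> enorm (x - z) <= ediam L.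
  move=> x z Lx Lz; apply: (ub_le_sup ub); by exists x => //; exists z.
split => //; apply: le_trans (H _ _ Lnu Lnu); by rewrite subrr enorm0.
Qed.

Lemma run_bound (R : realType) (n : nat) (L : set 'rV[R]_n) (C : R) nu0 Mk y nu rho Ups :
  L nu -> L `<=` eball nu rho -> 0 < C -> L nu0 -> packing_family L C Mk ->
  algorithm_run Mk nu0 y Ups ->
  forall j, enorm (Ups j.+1 - y) <=
    (enorm (nu - y) + (2 * C + 3) * (2 * enorm (nu - y) / C)) + ediam L / 2 ^+ j.
Proof.
move=> Lnu Lb C0 Lnu0 PF [U1 Urun].
have [d0 dd] := diam_props Lnu Lb.
set d := ediam L in d0 dd *.
set r := enorm (nu - y).
set T := r + (2 * C + 3) * (2 * r / C).
have r0 : 0 <= r by exact: enorm_ge0.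
have w0 : 0 <= 2 * r / C by rewrite divr_ge0 ?mulr_ge0 // ltW.
have rT : r <= T by rewrite /T lerDl mulr_ge0 // ?addr_ge0 ?mulr_ge0 // ltW.
have inv : forall j, L (Ups j.+1) /\
   (enorm (Ups j.+1 - nu) <= d / 2 ^+ j \/ enorm (Ups j.+1 - y) + 2 * (d / 2 ^+ j) <= T).
  elim => [|j [Lj IH]].
    rewrite U1; split => //; left; rewrite expr0 divr1; exact: dd.
  have := PF (Ups j.+1) j.+1 Lj isT.
  set M := Mk j.+1 (Ups j.+1).
  set e := d / (2 ^+ j.+1 * (C + 1)) => Mmax.
  have [[MA _] _] := Mmax.
  have [MU2 U2min] := Urun j.+1 isT.
  rewrite -/M in MU2 U2min.
  have [U2b LU2] := MA _ MU2.
  rewrite /eball /= in U2b.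
  have e0 : 0 <= e by rewrite divr_ge0 // mulr_ge0 // ?exprn_ge0 // addr_ge0 // ltW.
  have he : d / 2 ^+ j = 2 * (C + 1) * e.
    rewrite /e exprS; field; apply/andP; split.
      by rewrite lt0r_neq0 // ltr_wpDl // ltW.
    by rewrite expf_neq0.
  have he2 : d / 2 ^+ j.+1 = (C + 1) * e.
    rewrite /e; field; apply/andP; split.
      by rewrite lt0r_neq0 // ltr_wpDl // ltW.
    by rewrite expf_neq0.
  rewrite he2; split => //.
  have tri1 := enorm_tri (Ups j.+2) (Ups j.+1) y.
  case: IH => [IH|IH]; last first.
    right; rewrite he in IH U2b; lra.
  have nuA : (eball (Ups j.+1) (d / 2 ^+ j) `&` L) nu.
    by split => //; rewrite /eball /= enorm_sym.
  have [q Mq qe] := packing_near e0 Mmax nuA.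
  have yU2 : enorm (y - Ups j.+2) <= enorm (y - q).
    by case: (U2min q Mq) => [/ltW //|[-> _]].
  have yq := enorm_tri y nu q.
  have ry : enorm (y - nu) = r by rewrite enorm_sym.
  have nq : enorm (nu - q) = enorm (q - nu) by rewrite enorm_sym.
  have U2y : enorm (Ups j.+2 - y) = enorm (y - Ups j.+2) by rewrite enorm_sym.
  have key : enorm (Ups j.+2 - y) <= r + e by lra.
  have [hc|hc] := lerP (2 * r) (C * e).
    left; have := enorm_tri (Ups j.+2) y nu; rewrite ry mulrDl mul1r; lra.
  right.
  have ew : e < 2 * r / C by rewrite ltr_pdivlMr // mulrC.
  have : (2 * C + 3) * e <= (2 * C + 3) * (2 * r / C).
    by rewrite ler_pM2l ?ltW // ltr_wpDl // mulr_ge0 // ltW.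
  rewrite /T; lra.
move=> j; have [_ [h|h]] := inv j.
  have := enorm_tri (Ups j.+1) nu y; rewrite -/r; lra.
have : 0 <= d / 2 ^+ j by rewrite divr_ge0 // exprn_ge0.
lra.
Qed.

Lemma out_in (R : realType) (n : nat) (L : set 'rV[R]_n) (C : R) nu0 Mk y nu rho x :
  L nu -> L `<=` eball nu rho -> 0 < C -> algorithm_output L C nu0 Mk y x ->
  [set v : 'rV[R]_n | forall i, `[y ord0 i - ((enorm (nu - y) + (2 * C + 3) * (2 * enorm (nu - y) / C)) + 1),
      y ord0 i + ((enorm (nu - y) + (2 * C + 3) * (2 * enorm (nu - y) / C)) + 1)]%classic (v ord0 i)] x.
Proof.
move=> Lnu Lb C0 [Lnu0 [PF [Ups [run cv]]]].
set T := _ + _ * _.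
set S := [set v : 'rV[R]_n | _].
have cS : compact S.
  exact: (@rV_compact R n (fun i => `[y ord0 i - (T + 1), y ord0 i + (T + 1)]%classic) (fun i => @segment_compact R _ _)).
have clS : closed S.
  have := @compact_closed _ S; apply => //; exact: norm_hausdorff.
refine (@closed_cvg _ _ _ _ Ups S clS _ x cv).
have [d0 _] := diam_props Lnu Lb.
have hb := run_bound Lnu Lb C0 Lnu0 PF run.
set d := ediam L in d0 hb.
set N := (Num.trunc d).+1.
have dN : d < N%:R by rewrite -truncn_lt_nat.
have N2 : N%:R <= 2 ^+ N :> R.
  by rewrite -natrX ler_nat ltnW // ltn_expl.
exists N.+1 => // k /= Nk i.
case: k Nk => [//|j] Nj.
have dj : d / 2 ^+ j <= 1.
  rewrite ler_pdivrMr ?exprn_gt0 // mul1r.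
  apply: le_trans (ltW dN) _; apply: le_trans N2 _.
  by rewrite ler_eXn2l // ltr1n.
have h := le_trans (enorm_coord (Ups j.+1 - y) i) (hb j).
rewrite -/T !mxE ler_norml in h.
move: h => /andP [h1 h2].
change (Ups j.+1 ord0 i \in `[y ord0 i - (T + 1), y ord0 i + (T + 1)]).
clearbody T d; rewrite in_itv /=; apply/andP; split.
  move: h1 h2 dj; move: (d / 2 ^+ j) (Ups j.+1 ord0 i) (y ord0 i) => a b c h1 h2 dj; lra.
move: h1 h2 dj; move: (d / 2 ^+ j) (Ups j.+1 ord0 i) (y ord0 i) => a b c h1 h2 dj; lra.
Qed.


Unset Implicit Arguments.
Set Strict Implicit.

Theorem mainTheorem16 (R : realType) (n : nat) (K : set 'rV[R]_n)
  (y nu : 'rV[R]_n) (C : R)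
  (nu0 : nat -> 'rV[R]_n) (Mk : nat -> nat -> 'rV[R]_n -> set 'rV[R]_n)
  (num : nat -> 'rV[R]_n) :
  closed K -> is_convex K -> K nu -> 2 < C ->
  (forall m : nat, (0 < m)%N ->
     algorithm_output (eball nu (2 ^+ m) `&` K) C (nu0 m) (Mk m) y (num m)) ->
  exists S : set 'rV[R]_n, compact S /\ forall m : nat, (0 < m)%N -> S (num m).
Proof.
move=> _ _ Knu C2 H.
have C0 : 0 < C by apply: lt_trans C2.
set T := enorm (nu - y) + (2 * C + 3) * (2 * enorm (nu - y) / C).
exists [set v : 'rV[R]_n | forall i, `[y ord0 i - (T + 1), y ord0 i + (T + 1)]%classic (v ord0 i)].
split.
  exact: (@rV_compact R n (fun i => `[y ord0 i - (T + 1), y ord0 i + (T + 1)]%classic) (fun i => @segment_compact R _ _)).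
move=> m m0.
have Lnu : (eball nu (2 ^+ m) `&` K) nu.
  by split => //; rewrite /eball /= subrr enorm0 exprn_ge0.
have Lb : (eball nu (2 ^+ m) `&` K) `<=` eball nu (2 ^+ m) by move=> z [].
exact: (@out_in R n (eball nu (2 ^+ m) `&` K) C (nu0 m) (Mk m) y nu (2 ^+ m) (num m) Lnu Lb C0 (H m m0)).
Qed.
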